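(* Let $G$ be a connected graph. Then $\mathcal{Z}^{\mathrm{TE}}_+(G)=\mathcal{Z}^{\mathrm{TS}}_+(G)$ if and only if $G\cong K_n$ for some $n$.
   Context: PSD forcing: vertices are colored blue or white; if $B$ is the current set of blue vertices, $C$ a connected component of $G-B$, and $u$ a blue vertex with $N_G(u)\cap V(C)=\{v\}$, then $u$ may force $v$ to become blue. A PSD forcing set is a set of initially blue vertices from which repeated application of this rule turns every vertex blue; $\mathrm{Z}_+(G)$ is the minimum size of a PSD forcing set. $\mathcal{Z}^{\mathrm{TE}}_+(G)$ has as vertices the minimum PSD forcing sets of $G$, with $S_1S_2$ an edge iff $S_1\setminus S_2=\{v_1\}$ and $S_2\setminus S_1=\{v_2\}$ for some vertices $v_1,v_2$; $\mathcal{Z}^{\mathrm{TS}}_+(G)$ has the same vertex set with the additional adjacency requirement $v_1v_2\in E(G)$. *)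

(* Defs.v *)
From mathcomp Require Import all_boot all_order.
Set Implicit Arguments. Unset Strict Implicit. Unset Printing Implicit Defensive.

Section PSD.
Variables (T : finType) (e : rel T).

Definition simple_graph : Prop := symmetric e /\ irreflexive e.

Definition connected_graph : Prop := forall x y : T, connect e x y.

Definition del_rel (B : {set T}) : rel T :=
  fun x y => [&& e x y, x \notin B & y \notin B].

Definition comp_of (B : {set T}) (v : T) : {set T} :=
  [set w | (w \notin B) && connect (del_rel B) v w].

(* one PSD forcing step: u blue, v white, N(u) ∩ C_v = {v}; v turns blue *)
Definition psd_force (B : {set T}) (u v : T) : bool :=
  [&& u \in B, v \notin B & [set w in comp_of B v | e u w] == [set v]].

Definition psd_step : rel {set T} :=
  fun B B' => [exists u, exists v, psd_force B u v && (B' == v |: B)].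

Definition psd_forcing_set (S : {set T}) : bool := connect psd_step S setT.

(* Z_+(G): minimum size of a PSD forcing set (setT is always one) *)
Definition Zplus : nat :=
  \big[minn/#|T|]_(S : {set T} | psd_forcing_set S) #|S|.

Definition min_psd_forcing_set (S : {set T}) : bool :=
  psd_forcing_set S && (#|S| == Zplus).

Definition ZTE_adj (S1 S2 : {set T}) : bool :=
  [&& min_psd_forcing_set S1, min_psd_forcing_set S2 &
    [exists v1, exists v2, (S1 :\: S2 == [set v1]) && (S2 :\: S1 == [set v2])]].

Definition ZTS_adj (S1 S2 : {set T}) : bool :=
  [&& min_psd_forcing_set S1, min_psd_forcing_set S2 &
    [exists v1, exists v2, [&& S1 :\: S2 == [set v1], S2 :\: S1 == [set v2]
                             & e v1 v2]]].

End PSD.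

Definition complete_rel (n : nat) : rel 'I_n := fun x y => x != y.
Arguments complete_rel n : clear implicits.

Definition graph_iso (T1 T2 : finType) (e1 : rel T1) (e2 : rel T2) : Prop :=
  exists f : T1 -> T2, bijective f /\ forall x y, e2 (f x) (f y) = e1 x y.

(* Main.v *)
Require Import Defs.
From mathcomp Require Import all_boot all_order.
Set Implicit Arguments. Unset Strict Implicit. Unset Printing Implicit Defensive.


Lemma conn_closed (T : finType) (r : rel T) (A : pred T) x y :
  A x -> (forall a b, A a -> r a b -> A b) -> connect r x y -> A y.
Proof.
move=> Ax cl /connectP[p pth ->]; elim: p x Ax pth => //= z p IH x Ax /andP[rxz pth].
exact: IH (cl _ _ Ax rxz) pth.
Qed.

Lemma conn_transfer (T : finType) (r r' : rel T) (A : pred T) x y :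
  A x -> (forall a b, A a -> r a b -> A b /\ r' a b) -> connect r x y -> connect r' x y.
Proof.
move=> Ax cl /connectP[p pth ->]; elim: p x Ax pth => /= [|z p IH] x Ax.
  by rewrite connect0.
case/andP=> rxz pth; have [Az r'xz] := cl _ _ Ax rxz.
exact: connect_trans (connect1 r'xz) (IH _ Az pth).
Qed.

Lemma bigmin_le (I : eqType) (r : seq I) (P : pred I) (F : I -> nat) x0 j :
  j \in r -> P j -> \big[minn/x0]_(i <- r | P i) F i <= F j.
Proof.
elim: r => //= a r IH; rewrite inE big_cons; case/orP => [/eqP<-|jr] Pj.
  by rewrite Pj geq_minl.
case: (P a); last exact: IH.
by rewrite geq_min IH ?orbT.
Qed.

Lemma bigmin_attained (I : eqType) (r : seq I) (P : pred I) (F : I -> nat) x0 :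
  \big[minn/x0]_(i <- r | P i) F i = x0 \/
  exists j, [/\ j \in r, P j & \big[minn/x0]_(i <- r | P i) F i = F j].
Proof.
elim: r => /= [|a r IH]; first by left; rewrite big_nil.
rewrite big_cons; case Pa: (P a) => /=; last first.
  case: IH => [->|[j [jr Pj ->]]]; [by left | by right; exists j; split; rewrite ?inE ?jr ?orbT].
case: (leqP (F a) (\big[minn/x0]_(i <- r | P i) F i)) => h.
  by right; exists a; split; rewrite ?inE ?eqxx .
case: IH => [E|[j [jr Pj E]]]; [by left | by right; exists j; split; rewrite ?inE ?jr ?orbT].
Qed.


Lemma del_rel_sym (T : finType) (e : rel T) (B : {set T}) : symmetric e -> symmetric (del_rel e B).
Proof. by move=> se x y; rewrite /del_rel se; case: (x \in B); case: (y \in B); rewrite ?andbF. Qed.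

Lemma in_comp (T : finType) (e : rel T) (B : {set T}) v w :
  (w \in comp_of e B v) = (w \notin B) && connect (del_rel e B) v w.
Proof. by rewrite inE. Qed.

Lemma comp_self (T : finType) (e : rel T) (B : {set T}) v : v \notin B -> v \in comp_of e B v.
Proof. by move=> vB; rewrite in_comp vB connect0. Qed.

Lemma comp_adj (T : finType) (e : rel T) (B : {set T}) v w z :
  w \in comp_of e B v -> e w z -> z \notin B -> z \in comp_of e B v.
Proof.
rewrite !in_comp => /andP[wB c] ewz zB; rewrite zB /=.
apply: connect_trans c (connect1 _); by rewrite /del_rel ewz wB zB.
Qed.

Lemma comp_eq (T : finType) (e : rel T) (B : {set T}) c v : symmetric e ->
  v \in comp_of e B c -> comp_of e B v = comp_of e B c.
Proof.
move=> se; rewrite in_comp => /andP[vB cv]; apply/setP => w; rewrite !in_comp.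
case: (w \in B) => //=; apply/idP/idP => h.
  exact: connect_trans cv h.
rewrite (sym_connect_sym (del_rel_sym B se)) in cv.
exact: connect_trans cv h.
Qed.

Lemma comp_sub (T : finType) (e : rel T) (S B : {set T}) v : S \subset B ->
  comp_of e B v \subset comp_of e S v.
Proof.
move=> sSB; have nB z : z \notin B -> z \notin S by apply: contra; apply: (subsetP sSB).
apply/subsetP => w; rewrite !in_comp => /andP[wB c].
rewrite nB //=; apply: connect_sub c => x y /andP[exy /andP[xB yB]]; apply: connect1.
by rewrite /del_rel exy !nB.
Qed.


Lemma force_eq (T : finType) (e : rel T) (B : {set T}) u v :
  psd_force e B u v ->
  [/\ u \in B, v \notin B & forall w, (w \in comp_of e B v) && e u w = (w == v)].
Proof.
case/and3P => uB vB /eqP E; split => // w; move/setP: E => /(_ w).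
by rewrite !inE.
Qed.

Lemma mk_force (T : finType) (e : rel T) (B : {set T}) u v :
  u \in B -> v \notin B -> (forall w, (w \in comp_of e B v) && e u w = (w == v)) ->
  psd_force e B u v.
Proof.
move=> uB vB h; apply/and3P; split => //; apply/eqP/setP => w.
by rewrite !inE -(h w) !inE.
Qed.

Lemma force_adj (T : finType) (e : rel T) (B : {set T}) u v :
  psd_force e B u v -> e u v.
Proof. by case/force_eq => _ vB h; have := h v; rewrite eqxx => /andP[]. Qed.

Lemma step_of (T : finType) (e : rel T) (B : {set T}) u v :
  psd_force e B u v -> psd_step e B (v |: B).
Proof. by move=> f; apply/existsP; exists u; apply/existsP; exists v; rewrite f eqxx. Qed.

Lemma forcing_mono (T : finType) (e : rel T) (S B : {set T}) :
  S \subset B -> psd_forcing_set e S -> psd_forcing_set e B.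
Proof.
rewrite /psd_forcing_set => sSB /connectP[p pth lst].
elim: p S B sSB pth lst => [|S' p IH] S B sSB /=.
  move=> _ E; subst S.
  have ->: B = setT by apply/setP => x; rewrite inE; apply: (subsetP sSB); rewrite inE.
  exact: connect0.
case/andP => st pth lst.
case/existsP: st => u /existsP[v /andP[fS /eqP ES']]; subst S'.
have [uS vS fw] := force_eq fS.
case vB: (v \in B).
  apply: (IH (v |: S)) => //; apply/subsetP => x; rewrite !inE.
  by case/orP => [/eqP->|xS]; [rewrite vB | exact: (subsetP sSB)].
have fB : psd_force e B u v.
  apply: mk_force; [exact: (subsetP sSB) | by rewrite vB | ] => w.
  apply/idP/idP.
    case/andP => wc euw; rewrite -fw euw andbT.
    exact: (subsetP (comp_sub e v sSB)).
  move/eqP->; rewrite comp_self ?vB //=; have := fw v; rewrite eqxx; case/andP => //.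
apply: connect_trans (connect1 (step_of fB)) _.
apply: (IH (v |: S)) => //; exact: setUS.
Qed.

Lemma forcing_step (T : finType) (e : rel T) (B : {set T}) :
  psd_forcing_set e B -> B != setT -> exists u v, psd_force e B u v.
Proof.
rewrite /psd_forcing_set => /connectP[[|B' p] /= pth lst] nT.
  by rewrite -lst eqxx in nT.
case/andP: pth => /existsP[u /existsP[v /andP[f _]]] _; by exists u, v.
Qed.

Lemma setT_forcing (T : finType) (e : rel T) : psd_forcing_set e setT.
Proof. exact: connect0. Qed.

Lemma Zle (T : finType) (e : rel T) (S : {set T}) :
  psd_forcing_set e S -> Zplus e <= #|S|.
Proof. by move=> f; rewrite /Zplus; apply: bigmin_le => //; rewrite mem_index_enum. Qed.

Lemma Zmin_exists (T : finType) (e : rel T) : exists S, min_psd_forcing_set e S.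
Proof.
case: (bigmin_attained (index_enum {set T}) (psd_forcing_set e) (fun S => #|S|) #|T|).
  move=> E; exists setT; rewrite /min_psd_forcing_set setT_forcing /Zplus E cardsT eqxx.
  by [].
case=> S [_ fS E]; exists S; by rewrite /min_psd_forcing_set fS /Zplus E eqxx.
Qed.


Lemma swap_min (T : finType) (e : rel T) (S : {set T}) u v :
  simple_graph e -> min_psd_forcing_set e S -> psd_force e S u v ->
  min_psd_forcing_set e (v |: (S :\ u)).
Proof.
case=> se ie /andP[fS /eqP cS] f.
have [uS vS fw] := force_eq f.
have uv : u != v by apply: contraNneq vS => <-.
set S' := v |: (S :\ u).
have cS' : #|S'| = #|S|.
  by rewrite cardsU1 !inE (negbTE vS) andbF /= [in RHS](cardsD1 u S) uS.
have uS' : u \notin S' by rewrite !inE eqxx /= (negbTE uv).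
have vS' : v \in S' by rewrite !inE eqxx.
have fS' : psd_force e S' v u.
  apply: mk_force => // w; apply/idP/idP; last first.
    by move/eqP->; rewrite comp_self // se (force_adj f).
  case/andP => wc evw; apply/negPn/negP => wu.
  move: (wc); rewrite in_comp => /andP[wS' cuw].
  have wv : w != v by apply: contraNneq wS' => ->.
  have wS : w \notin S by move: wS'; rewrite !inE negb_or negb_and wu /= => /andP[].
  have wC : w \in comp_of e S v by apply: (comp_adj (@comp_self T e S v vS) evw wS).
  pose A := fun z => (z \in comp_of e S v) && (z != v).
  have clA : forall a b, A a -> del_rel e S' a b -> A b.
    move=> a b /andP[aC av] /and3P[eab aS' bS'].
    have bv : b != v by apply: contraNneq bS' => ->.
    have bu : b != u.
      apply/negP => /eqP bu; subst b; have := fw a; rewrite aC /= se eab (negbTE av).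
      by [].
    have bS : b \notin S by move: bS'; rewrite !inE negb_or negb_and bu /= => /andP[].
    by rewrite /A bv andbT (comp_adj aC eab bS).
  have cwu : connect (del_rel e S') w u.
    by rewrite (sym_connect_sym (del_rel_sym S' se)).
  have := conn_closed (A := A) (_ : A w) clA cwu.
  rewrite /A wC wv => /(_ isT) /andP[uC _].
  by move: uC; rewrite in_comp uS.
apply/andP; split; last by rewrite cS' cS.
rewrite /psd_forcing_set; apply: connect_trans (connect1 (step_of fS')) _.
apply: forcing_mono fS; apply/subsetP => x xS; rewrite !inE.
by case: (x =P u) => //= _; rewrite xS orbT.
Qed.


Lemma two_targets (T : finType) (e : rel T) (S : {set T}) u p q :
  simple_graph e -> min_psd_forcing_set e S -> psd_force e S u p ->
  psd_force e S u q -> p != q ->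
  ZTE_adj e (p |: (S :\ u)) (q |: (S :\ u)) /\
  ~~ ZTS_adj e (p |: (S :\ u)) (q |: (S :\ u)).
Proof.
move=> sg mS fp fq pq; have [se ie] := sg.
have m1 := swap_min sg mS fp; have m2 := swap_min sg mS fq.
have [uS pS fwp] := force_eq fp; have [_ qS fwq] := force_eq fq.
have D (a b : T) : a != b -> a \notin S -> b \notin S ->
    (a |: (S :\ u)) :\: (b |: (S :\ u)) = [set a].
  move=> ab aS bS; apply/setP => x; rewrite !inE.
  case: (x =P a) => [->|_] /=; first by rewrite (negbTE ab) (negbTE aS) !andbF.
  by case: ((x != u) && (x \in S)); rewrite ?orbT ?andbF.
have D1 := D p q pq pS qS; have D2 := D q p ltac:(by rewrite eq_sym) qS pS.
split.
  rewrite /ZTE_adj m1 m2 /=; apply/existsP; exists p; apply/existsP; exists q.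
  by rewrite D1 D2 !eqxx.
rewrite /ZTS_adj m1 m2 /=; apply/existsP => -[v1 /existsP[v2 /and3P[/eqP E1 /eqP E2 ev]]].
rewrite D1 in E1; rewrite D2 in E2.
move/set1_inj: E1 => E1; move/set1_inj: E2 => E2; subst v1 v2.
have qC : q \in comp_of e S p by apply: (comp_adj (@comp_self T e S p pS) ev qS).
by have := fwp q; rewrite qC (force_adj fq) /= eq_sym (negbTE pq).
Qed.


Definition isoS (T : finType) (e : rel T) (S : {set T}) : {set T} :=
  [set w | (w \notin S) && [forall y, e w y ==> (y \in S)]].

Lemma isoP (T : finType) (e : rel T) (S : {set T}) w :
  reflect (w \notin S /\ forall y, e w y -> y \in S) (w \in isoS e S).
Proof.
rewrite inE; apply: (iffP andP) => [[wS /forallP h]|[wS h]]; split => //.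
  by move=> y; move/implyP: (h y).
by apply/forallP => y; apply/implyP; apply: h.
Qed.

Lemma comp_iso (T : finType) (e : rel T) (S : {set T}) w z :
  w \in isoS e S -> z \in comp_of e S w -> z = w.
Proof.
case/isoP => wS h; rewrite in_comp => /andP[_ c].
have := conn_closed (A := fun t => t == w) (eqxx w) _ c; move=> H; apply/eqP; apply: H.
move=> a b /eqP -> /and3P[ewb _ bS]; by rewrite (h _ ewb) in bS.
Qed.

Lemma force_iso (T : finType) (e : rel T) (S : {set T}) x w :
  symmetric e -> x \in S -> e x w -> w \in isoS e S -> psd_force e S x w.
Proof.
move=> se xS exw wI; have [wS _] := isoP _ _ _ wI.
apply: mk_force => // z; apply/idP/idP.
  by case/andP => /(comp_iso wI) ->.
by move/eqP->; rewrite comp_self ?exw.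
Qed.

Lemma iso_nbr_in (T : finType) (e : rel T) (S : {set T}) w x :
  w \in isoS e S -> e w x -> x \in S.
Proof. by case/isoP => _ h; apply: h. Qed.

Lemma twin (T : finType) (e : rel T) (S : {set T}) w x :
  simple_graph e -> min_psd_forcing_set e S -> w \in isoS e S -> e w x ->
  (forall y, e x y -> y != w -> y \in S) ->
  forall y, y != x -> y != w -> e x y = e w y.
Proof.
move=> [se ie] /andP[fS /eqP cS] wI ewx hx y yx yw.
have xS : x \in S := iso_nbr_in wI ewx.
have [wS _] := isoP _ _ _ wI.
have xw : x != w by apply: contraNneq wS => <-.
set T' := S :\ x.
have wT : w \notin T' by rewrite !inE negb_and wS orbT.
have xT : x \notin T' by rewrite !inE eqxx.
have cl : forall a b, (a == w) || (a == x) -> del_rel e T' a b -> (b == w) || (b == x).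
  move=> a b /orP[/eqP->|/eqP->] /and3P[eab _ bT];
    move: bT; rewrite !inE negb_and negbK.
    by rewrite (iso_nbr_in wI eab) orbF => ->; rewrite orbT.
  case: (b =P w) => //= /eqP bw; by rewrite (hx b eab bw) orbF.
have inC : forall c z, (c == w) || (c == x) -> z \in comp_of e T' c -> (z == w) || (z == x).
  by move=> c z hc; rewrite in_comp => /andP[_ cc]; apply: (conn_closed (A := fun t => (t == w) || (t == x)) hc cl cc).
have subS : forall B : {set T}, T' \subset B -> x \in B -> S \subset B.
  move=> B sub xB; apply/subsetP => z zS; case: (z =P x) => [->//|/eqP zx].
  by apply: (subsetP sub); rewrite !inE zx zS.
apply/eqP; apply: contraT => neq.
have fT' : psd_forcing_set e T'.
  case Exy: (e x y); case Ewy: (e w y); rewrite ?Exy ?Ewy ?eqxx // in neq.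
    have yS := hx y Exy yw.
    have yT : y \in T' by rewrite !inE yx yS.
    have f1 : psd_force e T' y x.
      apply: mk_force => // z; apply/idP/idP.
        case/andP => zc eyz; have := inC x z ltac:(by rewrite eqxx orbT) zc.
        by case/orP => // /eqP zw; subst z; rewrite se Ewy in eyz.
      by move/eqP->; rewrite comp_self // se Exy.
    apply: connect_trans (connect1 (step_of f1)) _.
    apply: forcing_mono fS; apply: subS; [exact: subsetU1 | exact: setU11].
  have yS := iso_nbr_in wI Ewy.
  have yT : y \in T' by rewrite !inE yx yS.
  have f1 : psd_force e T' y w.
    apply: mk_force => // z; apply/idP/idP.
      case/andP => zc eyz; have := inC w z ltac:(by rewrite eqxx) zc.
      by case/orP => // /eqP zx; subst z; rewrite se Exy in eyz.
    by move/eqP->; rewrite comp_self // se Ewy.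
  set T'' := w |: T'.
  have xT'' : x \notin T'' by rewrite /T'' /T' !inE eqxx (negbTE xw).
  have f2 : psd_force e T'' w x.
    apply: mk_force; [exact: setU11 | exact: xT'' | ] => z; apply/idP/idP.
      case/andP => zc _; move: zc; rewrite in_comp => /andP[_ cc].
      apply: (conn_closed (A := fun t => t == x) (eqxx x) _ cc).
      move=> a b /eqP-> /and3P[exb _ bT]; move: bT; rewrite !inE negb_or negb_and negbK.
      case/andP => bw /orP[//|bS]; by rewrite (hx b exb bw) in bS.
    by move/eqP->; rewrite comp_self // ewx.
  apply: connect_trans (connect1 (step_of f1)) _.
  apply: connect_trans (connect1 (step_of f2)) _.
  apply: forcing_mono fS; apply: subS; last exact: setU11.
  by apply: subset_trans (subsetU1 _ _) (subsetU1 _ _).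
by have := Zle fT'; rewrite -cS (cardsD1 x S) xS add1n ltnn.
Qed.


Definition NoTwo (T : finType) (e : rel T) := forall S u p q,
  min_psd_forcing_set e S -> psd_force e S u p -> psd_force e S u q -> p = q.

Lemma complete_of_twins (T : finType) (e : rel T) w :
  simple_graph e -> connected_graph e ->
  (forall x, e w x -> forall y, y != x -> y != w -> e x y = e w y) ->
  forall a b, a != b -> e a b.
Proof.
move=> [se ie] cg tw.
have all : forall z, (z == w) || e w z.
  move=> z; apply: (conn_closed (A := fun t => (t == w) || e w t) _ _ (cg w z)).
    by rewrite eqxx.
  move=> a b /orP[/eqP->|ewa] eab; first by rewrite eab orbT.
  case: (b =P w) => //= /eqP bw; case: (b =P a) => [ba|/eqP ba].
    by subst b; rewrite ie in eab.
  by rewrite -(tw a ewa b ba bw).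
move=> a b ab.
case: (a =P w) => [E|/eqP aw].
  by subst a; have := all b; rewrite eq_sym (negbTE ab).
case: (b =P w) => [E|/eqP bw].
  by subst b; have := all a; rewrite (negbTE aw) se.
have := all a; rewrite (negbTE aw) /= => ewa.
have := all b; rewrite (negbTE bw) /= => ewb.
by rewrite (tw a ewa b) // eq_sym.
Qed.

Lemma all_iso_complete (T : finType) (e : rel T) (S : {set T}) :
  simple_graph e -> connected_graph e -> NoTwo e -> min_psd_forcing_set e S ->
  S != setT -> (forall w, w \notin S -> w \in isoS e S) -> forall a b, a != b -> e a b.
Proof.
move=> sg cg nt mS nT iso; have [se ie] := sg.
have [w wS] : exists w, w \notin S.
  case: (pickP [pred w | w \notin S]) => [w wS | none]; first by exists w.
  case/negP: nT; apply/eqP/setP => z; rewrite inE; by move: (none z) => /= /negbFE.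
have wI := iso w wS.
apply: (complete_of_twins sg cg (w:=w)) => x ewx.
apply: (twin sg mS wI ewx) => y exy yw.
apply/negPn/negP => yS.
have yI := iso y yS.
have xS := iso_nbr_in wI ewx.
have exw : e x w by rewrite se.
have fw := force_iso se xS exw wI.
have fy := force_iso se xS exy yI.
by have E := nt S x w y mS fw fy; rewrite E eqxx in yw.
Qed.

Lemma Z_lt (T : finType) (e : rel T) (a b : T) :
  simple_graph e -> connected_graph e -> a != b -> Zplus e < #|T|.
Proof.
move=> [se ie] cg ab.
have [y eay] : exists y, e a y.
  case/connectP: (cg a b) => [[|y p] /= pth lst]; first by rewrite lst eqxx in ab.
  by case/andP: pth => eay _; exists y.
have yB : y \in [set~ a].
  rewrite !inE; apply: contraTneq eay => E; rewrite E ie; exact: isT.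
have aB : a \notin [set~ a] by rewrite !inE negbK.
have f : psd_force e [set~ a] y a.
  apply: mk_force => // z; apply/idP/idP.
    rewrite in_comp !inE negbK; move=> /andP[/andP[h _] _]; exact: h.
  move/eqP->; rewrite comp_self //= se; exact: eay.
have fB : psd_forcing_set e [set~ a].
  apply: connect_trans (connect1 (step_of f)) _.
  rewrite setUCr; exact: connect0.
have h1 := Zle fB; rewrite cardsC1 in h1.
have h0 : 0 < #|T| by apply/card_gt0P; exists a.
apply: leq_ltn_trans h1 _; rewrite ltn_predL; exact: h0.
Qed.


Lemma first_force (T : finType) (e : rel T) (S : {set T}) c :
  simple_graph e -> psd_forcing_set e S -> c \notin S ->
  exists u v, psd_force e S u v /\ v \in comp_of e S c.
Proof.
move=> [se ie] fS cS.
set C := comp_of e S c.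
set B := ~: C.
have sSB : S \subset B.
  by apply/subsetP => s sS; rewrite inE in_comp sS.
have fB := forcing_mono sSB fS.
have cC : c \in C by apply: comp_self.
have nT : B != setT.
  by apply/negP => /eqP E; have := in_setT c; rewrite -E inE cC.
have [u [v fuv]] := forcing_step fB nT.
have [uB vB fwB] := force_eq fuv.
have vC : v \in C by move: vB; rewrite inE negbK.
have CE : comp_of e S v = C by apply: comp_eq.
have CB : comp_of e B v = comp_of e S v.
  apply/eqP; rewrite eqEsubset comp_sub //=.
  apply/subsetP => z; rewrite CE => zC; rewrite in_comp inE zC /=.
  have : connect (del_rel e S) v z by move: zC; rewrite -CE in_comp => /andP[].
  apply: (conn_transfer (A := fun t => t \in C) vC) => a b aC /and3P[eab aS bS].
  have bC : b \in C by apply: comp_adj aC eab bS.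
  by split => //; rewrite /del_rel eab !in_setC aC bC.
have vS : v \notin S by move: vC; rewrite in_comp => /andP[].
have uS : u \in S.
  apply/negPn/negP => uS.
  have uC : u \in C by apply: comp_adj vC _ uS; rewrite se (force_adj fuv).
  by move: uB; rewrite inE uC.
exists u, v; split => //; apply: mk_force => // w.
by rewrite -CB fwB.
Qed.

Lemma iso_sub (T : finType) (e : rel T) (S : {set T}) u v :
  simple_graph e -> NoTwo e -> min_psd_forcing_set e S -> psd_force e S u v ->
  v \notin isoS e S -> isoS e S \subset isoS e (v |: (S :\ u)).
Proof.
move=> [se ie] nt mS f vI; apply/subsetP => w wI.
have [uS vS _] := force_eq f.
have wv : w != v by apply: contraNneq vI => <-.
have [wS nb] := isoP _ _ _ wI.
have nuw : ~~ e u w.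
  apply/negP => euw; have fw := force_iso se uS euw wI.
  by have E := nt S u v w mS f fw; rewrite E eqxx in wv.
apply/isoP; split.
  by rewrite !inE negb_or wv negb_and wS orbT.
move=> y ewy; rewrite !inE (nb y ewy) andbT.
case: (y =P u) => [E|_]; last by rewrite orbT.
by subst y; rewrite se ewy in nuw.
Qed.


Lemma piece_closed (T : finType) (e : rel T) (S : {set T}) u v a b :
  symmetric e -> psd_force e S u v -> (a \in comp_of e S v) && (a != v) ->
  del_rel e (v |: (S :\ u)) a b -> (b \in comp_of e S v) && (b != v).
Proof.
move=> se f /andP[aC av] /and3P[eab aS' bS'].
have [uS vS fw] := force_eq f.
have bv : b != v by apply: contraNneq bS' => ->; rewrite !inE eqxx.
have bu : b != u.
  apply/negP => /eqP bu; subst b; have := fw a; rewrite aC /= se eab (negbTE av).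
  by [].
have bS : b \notin S by move: bS'; rewrite !inE negb_or negb_and bu /= => /andP[].
by rewrite bv andbT (comp_adj aC eab bS).
Qed.

Lemma complete_from_NoTwo (T : finType) (e : rel T) :
  simple_graph e -> connected_graph e -> NoTwo e -> forall a b, a != b -> e a b.
Proof.
move=> sg cg nt; have [se ie] := sg.
case: (boolP [forall a, forall b, (a != b) ==> e a b]) => [/forallP h a b ab|].
  by move/forallP: (h a) => /(_ b) /implyP; apply.
rewrite negb_forall => /existsP[a0]; rewrite negb_forall => /existsP[b0].
rewrite negb_imply => /andP[ab0 _].
have hZ := Z_lt sg cg ab0.
have notT : forall S, min_psd_forcing_set e S -> S != setT.
  move=> S /andP[_ /eqP cS]; apply/negP => /eqP E; move: hZ.
  by rewrite -cS E cardsT ltnn.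
have [S0 mS0] := Zmin_exists e.
case: (@arg_maxnP _ S0 (min_psd_forcing_set e) (fun S => #|isoS e S|) mS0)
  => Sm mSm maxI.
case: (boolP [exists c, (c \notin Sm) && (c \notin isoS e Sm)]); last first.
  rewrite negb_exists => /forallP hc.
  apply: (all_iso_complete sg cg nt mSm (notT _ mSm)) => w wS.
  by move: (hc w); rewrite negb_and wS /= negbK.
case/existsP => c0 /andP[c0S c0I].
pose Q := fun p : {set T} * T => [&& min_psd_forcing_set e p.1,
  #|isoS e p.1| == #|isoS e Sm|, p.2 \notin p.1 & p.2 \notin isoS e p.1].
have Q0 : Q (Sm, c0) by rewrite /Q /= mSm eqxx c0S c0I.
case: (@arg_minnP _ (Sm, c0) Q (fun p => #|comp_of e p.1 p.2|) Q0)
  => [[S c]] /and4P[mS /eqP IS cS cI] minC.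
simpl in mS, IS, cS, cI.
have [c' [ecc' c'S]] : exists c', e c c' /\ c' \notin S.
  case: (boolP [exists y, e c y && (y \notin S)]) => [/existsP[y /andP[h1 h2]]|].
    by exists y.
  rewrite negb_exists => /forallP hn; case/negP: cI; apply/isoP; split => // y ecy.
  by move: (hn y); rewrite ecy /= negbK.
have fS : psd_forcing_set e S by case/andP: mS.
have [u [v [f vC]]] := first_force sg fS cS.
have [uS vS fw] := force_eq f.
have CE : comp_of e S v = comp_of e S c := comp_eq se vC.
have vI : v \notin isoS e S.
  apply/negP => vI; have cC : c \in comp_of e S v by rewrite CE comp_self.
  by have E := comp_iso vI cC; rewrite -E in vI; rewrite vI in cI.
set S1 := v |: (S :\ u).
have mS1 := swap_min sg mS f.
have isub := iso_sub sg nt mS f vI.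
have [y [yS yC yv yI]] :
    exists y, [/\ y \notin S, y \in comp_of e S c, y != v & y \notin isoS e S].
  case: (c =P v) => [E|/eqP cv]; last by exists c; split => //; apply: comp_self.
  exists c'; split => //.
  - exact: comp_adj (@comp_self T e S c cS) ecc' c'S.
  - by apply/eqP => E'; rewrite E' -E ie in ecc'.
  - apply/negP => /isoP [_ h]; have ec'c : e c' c by rewrite se.
    by have := h c ec'c; rewrite (negbTE cS).
have yS1 : y \notin S1 by rewrite !inE negb_or yv negb_and yS orbT.
have IS1 : #|isoS e S1| <= #|isoS e Sm| := maxI S1 mS1.
case: (boolP (y \in isoS e S1)) => yI1.
  have h : #|y |: isoS e S| <= #|isoS e S1|.
    apply: subset_leq_card; apply/subsetP => z.
    rewrite in_setU1 => /orP[/eqP->//|]; exact: (subsetP isub).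
  by move: (leq_trans h IS1); rewrite cardsU1 yI IS add1n ltnn.
have Q1 : Q (S1, y).
  rewrite /Q /= mS1 yS1 yI1 /= andbT eqn_leq IS1 -IS /=.
  exact: subset_leq_card isub.
have sub : comp_of e S1 y \subset comp_of e S c :\ v.
  apply/subsetP => z; rewrite in_comp => /andP[_ cz].
  have y0 : (y \in comp_of e S v) && (y != v) by rewrite CE yC yv.
  have := conn_closed (A := fun t => (t \in comp_of e S v) && (t != v)) y0
    (fun a b ha hab => piece_closed se f ha hab) cz.
  by rewrite in_setD1 CE andbC.
have h2 := subset_leq_card sub.
have h3 : #|comp_of e S c :\ v| < #|comp_of e S c|.
  by rewrite [X in _ < X](cardsD1 v) vC add1n ltnSn.
by have := leq_ltn_trans (leq_trans (minC _ Q1) h2) h3; rewrite ltnn.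
Qed.

Unset Implicit Arguments.

Theorem proposition4p12 (T : finType) (e : rel T) :
  simple_graph e -> connected_graph e ->
  ((forall S1 S2 : {set T}, ZTE_adj e S1 S2 = ZTS_adj e S1 S2) <->
   exists n : nat, graph_iso e (complete_rel n)).
Proof.
move=> sg cg; have [se ie] := sg; split.
  move=> HH.
  have nt : NoTwo e.
    move=> S u p q mS fp fq; apply/eqP; apply: contraT => pq.
    have [h1 h2] := two_targets sg mS fp fq pq.
    by move: h2; rewrite -HH h1.
  have cpl := complete_from_NoTwo sg cg nt.
  exists #|T|; exists enum_rank; split.
    exact: (Bijective (@enum_rankK T) (@enum_valK T)).
  move=> x y; rewrite /complete_rel (inj_eq (@enum_rank_inj T)).
  case: (x =P y) => [->|/eqP xy]; [by rewrite ie | by rewrite cpl].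
case=> n [f [[g fK gK] hf]].
have ex : forall x y, e x y = (x != y).
  by move=> x y; rewrite -hf /complete_rel (can_eq fK).
move=> S1 S2; rewrite /ZTE_adj /ZTS_adj.
case: (min_psd_forcing_set e S1) => //=; case: (min_psd_forcing_set e S2) => //=.
apply/existsP/existsP => -[v1 /existsP[v2 h]]; exists v1; apply/existsP; exists v2.
  case/andP: h => /eqP E1 /eqP E2; rewrite E1 E2 !eqxx ex /=.
  have : v1 \in S1 :\: S2 by rewrite E1 set11.
  have : v2 \in S2 :\: S1 by rewrite E2 set11.
  rewrite !inE => /andP[_ v2S2] /andP[v1S2 _].
  by apply: contraNneq v1S2 => ->.
by case/and3P: h => -> ->.
Qed.
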